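(* Let $\mathbb{F}$ be a field with more than $(l+2)/2$ elements, and let $\Phi: M_n(\mathbb{F}) \to M_l(\mathbb{F})$ be a linear map. Then $\Phi(X)\Phi(Y) = 0$ for all $X,Y \in M_n(\mathbb{F})$ if and only if there exist nonnegative integers $p,q,u,v$ with $2p+q = l$, $u\le p$, $v\le q$, and an invertible $S_0 \in M_l(\mathbb{F})$ (all independent of $A$) such that for every $A \in M_n(\mathbb{F})$, $$S_0^{-1}\Phi(A)S_0 = \begin{pmatrix} 0_p & Z_{12} & Z_{13}\\ 0_p & 0_p & 0\\ 0 & Z_{32} & 0_q\end{pmatrix},\quad Z_{13} = \begin{pmatrix} \hat Z_{13} & 0_{u,q-v}\\ 0_{p-u,v} & 0_{p-u,q-v}\end{pmatrix},\quad Z_{32} = \begin{pmatrix} 0_{v,u} & 0_{v,p-u}\\ 0_{q-v,u} & \hat Z_{32}\end{pmatrix},$$ where $Z_{12}\in M_p(\mathbb{F})$, $\hat Z_{13}$ is $u\times v$ and $\hat Z_{32}$ is $(q-v)\times(p-u)$ (all depending on $A$), the block rows/columns having sizes $p,p,q$.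
   Context: $0_{a,b}$ denotes the $a\times b$ zero matrix and $0_p$ the $p\times p$ zero matrix. *)

(* Defs.v *)
From HB Require Import structures.
From mathcomp Require Import all_boot all_order all_algebra.
Set Implicit Arguments. Unset Strict Implicit. Unset Printing Implicit Defensive.
Import Order.TTheory GRing.Theory Num.Theory.
Local Open Scope ring_scope.

(* [thm38_form p q u v M] : the l x l matrix M (with l = 2p+q), split into
   block rows/columns of sizes p, p, q (indices [0,p), [p,2p), [2p,2p+q)), has
   the shape
        ( 0_p  Z12  Z13 )
        ( 0_p  0_p  0   )
        ( 0    Z32  0_q )
   with Z13 = ( hatZ13  0 ; 0  0 )  (hatZ13 of size u x v, top-left of block (1,3))
   and  Z32 = ( 0  0 ; 0  hatZ32 )  (hatZ32 of size (q-v) x (p-u), bottom-right of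
   block (3,2)).  Written entrywise: an entry may be nonzero only inside Z12,
   inside hatZ13, or inside hatZ32. *)
Definition thm38_form (F : fieldType) (l p q u v : nat) (M : 'M[F]_l) : Prop :=
  forall i j : 'I_l, M i j != 0 ->
    [|| ((i < p)%N && (p <= j < p + p)%N),
        ((i < u)%N && (p + p <= j < p + p + v)%N)
      | ((p + p + v <= i)%N && (p + u <= j < p + p)%N)].

(* Main.v *)
Require Import Defs.
From HB Require Import structures.
From mathcomp Require Import all_boot all_order all_algebra.
From mathcomp Require Import zify fingroup perm.
Set Implicit Arguments. Unset Strict Implicit.
Import GRing.Theory.
Local Open Scope ring_scope.

Lemma key (F : fieldType) l (I : finType) (B : I -> 'M[F]_l) (M : 'M[F]_l) :
  (M <= (\sum_i B i))%MS -> (forall i, B i *m M = 0) ->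
  forall i j, (row_ebase (\sum_i B i)%MS *m M *m invmx (row_ebase (\sum_i B i)%MS)) i j != 0 ->
   (\rank (\sum_i B i)%MS <= i)%N && (j < \rank (\sum_i B i)%MS)%N.
Proof.
set U := (\sum_i B i)%MS; set T := row_ebase U; set r := \rank U.
move=> MU BM i j Nij.
have UK : (U <= kermx M)%MS by apply/sumsmx_subP => k _; apply/sub_kermxP.
have e : (T *m M *m invmx T) i j = (row i T *m M *m invmx T) 0 j by rewrite -!row_mul [RHS]mxE.
rewrite e in Nij.
apply/andP; split.
  rewrite leqNgt; apply/negP => ir.
  have : (row i T <= U)%MS.
    have -> : row i T = row i (pid_mx r *m T).
      rewrite row_mul; have -> : row i (pid_mx r) = row i (1%:M : 'M[F]_l).
        by apply/rowP => k; rewrite !mxE ir andbT.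
      by rewrite -row_mul mul1mx.
    apply: submx_trans (row_sub _ _) _ => /=.
    have -> : pid_mx r *m T = invmx (col_ebase U) *m U.
      have hU : col_ebase U *m pid_mx r *m T = U := mulmx_ebase U.
      by rewrite -{2}hU !mulmxA mulVmx ?col_ebase_unit // mul1mx.
    exact: submxMl.
  move=> /(submx_trans)/(_ UK)/sub_kermxP => h.
  by move: Nij; rewrite h mul0mx mxE eqxx.
rewrite ltnNge; apply/negP => rj.
have : (row i T *m M <= U)%MS by exact: submx_trans (submxMl _ _) MU.
case/submxP => y hy.
have hU : col_ebase U *m pid_mx r *m T = U := mulmx_ebase U.
move: Nij; rewrite hy -hU -!mulmxA mulmxV ?row_ebase_unit // mulmx1.
rewrite !mulmxA mxE big1 ?eqxx // => k _.
rewrite [pid_mx _ _ _]mxE.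
have -> : (k == j :> nat) && (k < r)%N = false.
  by apply/negbTE; apply/negP => /andP[/eqP -> ]; rewrite ltnNge rj.
by rewrite mulr0.
Qed.

Lemma phi_expand (F : fieldType) n l (Phi : {linear 'M[F]_n -> 'M[F]_l}) (A : 'M[F]_n) :
  Phi A = \sum_(k : 'I_n * 'I_n) A k.1 k.2 *: Phi (delta_mx k.1 k.2).
Proof.
rewrite {1}(matrix_sum_delta A) linear_sum.
under eq_bigr do rewrite linear_sum.
rewrite pair_big; apply: eq_bigr => k _; by rewrite linearZ.
Qed.

Lemma phi_sub (F : fieldType) n l (Phi : {linear 'M[F]_n -> 'M[F]_l}) (A : 'M[F]_n) :
  (Phi A <= \sum_(k : 'I_n * 'I_n) Phi (delta_mx k.1 k.2))%MS.
Proof.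
rewrite phi_expand; apply: summx_sub => k _; apply: scalemx_sub.
exact: (sumsmx_sup k).
Qed.

Lemma phi_subT (F : fieldType) n l (Phi : {linear 'M[F]_n -> 'M[F]_l}) (A : 'M[F]_n) :
  ((Phi A)^T <= \sum_(k : 'I_n * 'I_n) (Phi (delta_mx k.1 k.2))^T)%MS.
Proof.
rewrite phi_expand linear_sum; apply: summx_sub => k _; rewrite linearZ /=; apply: scalemx_sub.
exact: (sumsmx_sup k).
Qed.

Definition rotf l a (i : 'I_l) : 'I_l :=
  Ordinal (ltn_pmod (i + a) (leq_ltn_trans (leq0n i) (ltn_ord i))).

Lemma rotf_inj l a : injective (@rotf l a).
Proof.
move=> i j /(congr1 val) /= /eqP h.
apply/val_inj/eqP => /=.
by rewrite eqn_modDr !modn_small in h.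
Qed.

Lemma rotf_val l p (i : 'I_l) : (p <= l)%N ->
  val (@rotf l (l - p) i) = if (p <= i)%N then (i - p)%N else (i + (l - p))%N.
Proof.
move=> pl /=; have il := ltn_ord i.
case: ifP => hp.
  have -> : (i + (l - p) = (i - p) + l)%N by lia.
  by rewrite modnDr modn_small //; lia.
by rewrite modn_small //; lia.
Qed.

Lemma rank_ineq (F : fieldType) (I : finType) l (B : I -> 'M[F]_l) :
  (forall a b, B a *m B b = 0) ->
  (\rank (\sum_k (B k)^T)%MS + \rank (\sum_k B k)%MS <= l)%N.
Proof.
move=> H.
have UK : forall k, ((\sum_k B k)%MS <= kermx (B k))%MS.
  by move=> k; apply/sumsmx_subP => k' _; apply/sub_kermxP.
have : ((\sum_k (B k)^T)%MS <= kermx (\sum_k B k)%MS^T)%MS.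
  apply/sumsmx_subP => k _; apply/sub_kermxP.
  by rewrite -trmx_mul; apply/eqP; rewrite trmx_eq0; apply/eqP/sub_kermxP.
move/mxrankS; rewrite mxrank_ker mxrank_tr.
have := rank_leq_col (\sum_k B k)%MS; lia.
Qed.

Lemma invmx_eq (F : fieldType) l (X Y : 'M[F]_l) :
  X \in unitmx -> X *m Y = 1%:M -> invmx X = Y.
Proof. by move=> Xu e; rewrite -[LHS]mulmx1 -e mulmxA mulVmx // mul1mx. Qed.

Theorem theorem3p8 (F : fieldType) (n l : nat)
  (hF : exists s : seq F, uniq s /\ (l + 2 < 2 * size s)%N)
  (Phi : {linear 'M[F]_n -> 'M[F]_l}) :
  (forall X Y : 'M[F]_n, Phi X *m Phi Y = 0) <->
  (exists p q u v : nat,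
     [/\ (2 * p + q = l)%N, (u <= p)%N & (v <= q)%N] /\
     exists S0 : 'M[F]_l, S0 \in unitmx /\
       forall A : 'M[F]_n, thm38_form p q u v (invmx S0 *m Phi A *m S0)).
Proof.
split.
  move=> H.
  pose B := fun k : 'I_n * 'I_n => Phi (delta_mx k.1 k.2).
  have HB : forall a b, B a *m B b = 0 by move=> a b; apply: H.
  have RI := rank_ineq HB.
  case: (leqP (2 * \rank (\sum_k (B k)^T)%MS) l) => hc.
    set p := \rank (\sum_k (B k)^T)%MS.
    exists p, (l - 2 * p)%N, p, (l - 2 * p)%N; split; first by split => //; lia.
    set T := row_ebase (\sum_k (B k)^T)%MS.
    exists T^T; split; first by rewrite unitmx_tr row_ebase_unit.
    move=> A i j.
    have -> : invmx T^T *m Phi A *m T^T = (T *m (Phi A)^T *m invmx T)^T.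
      by rewrite !trmx_mul trmxK trmx_inv mulmxA.
    rewrite mxE => /(key (phi_subT Phi A)) h.
    have /h/andP[h1 h2] : forall k, (B k)^T *m (Phi A)^T = 0.
      by move=> k; rewrite -trmx_mul H trmx0.
    have := ltn_ord j; have := ltn_ord i; rewrite -/p; move: hc h1 h2; rewrite /p /B /=; lia.
  have hr : (2 * \rank (\sum_k B k)%MS <= l)%N by move: RI hc; rewrite /B /=; lia.
  set p := \rank (\sum_k B k)%MS.
  have pl : (p <= l)%N by lia.
  exists p, (l - 2 * p)%N, 0%N, 0%N; split; first by split => //; lia.
  set T := row_ebase (\sum_k B k)%MS.
  set s := perm (@rotf_inj l (l - p)).
  set P := perm_mx s : 'M[F]_l.
  have Pu : P \in unitmx by apply: unitmx_perm.
  have Tu : T \in unitmx by apply: row_ebase_unit.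
  have iP : invmx P = perm_mx s^-1.
    have e : P *m perm_mx s^-1 = 1%:M by rewrite -perm_mxM mulgV perm_mx1.
    by rewrite -[LHS]mulmx1 -e mulmxA mulVmx // mul1mx.
  exists (invmx (P *m T)); split; first by rewrite unitmx_inv unitmx_mul Pu Tu.
  move=> A i j.
  rewrite invmxK.
  have -> : invmx (P *m T) = invmx T *m invmx P.
    apply: invmx_eq; first by rewrite unitmx_mul Pu Tu.
    by rewrite -mulmxA (mulmxA T) mulmxV // mul1mx mulmxV.
  rewrite iP.
  have -> : P *m T *m Phi A *m (invmx T *m perm_mx s^-1)
     = col_perm s (row_perm s (T *m Phi A *m invmx T)).
    by rewrite col_permE row_permE !mulmxA.
  have e : forall N : 'M[F]_l, col_perm s (row_perm s N) i j = N (s i) (s j).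
    by move=> N; rewrite !mxE.
  rewrite e => Nij.
  have /andP[h1 h2] := key (phi_sub Phi A) (fun k => H _ _) Nij.
  move: h1 h2; rewrite !permE !rotf_val // -/p.
  have := ltn_ord j; have := ltn_ord i.
  case: ifP; case: ifP; lia.
case=> p [q [u [v [[hl hu hv] [S [Su HS]]]]]] X Y.
have Z : (invmx S *m Phi X *m S) *m (invmx S *m Phi Y *m S) = 0.
  apply/matrixP => i j; rewrite !mxE; apply: big1 => k _.
  have hX := HS X i k; have hY := HS Y k j.
  case: (eqVneq ((invmx S *m Phi X *m S) i k) 0) => [-> | nx]; first by rewrite mul0r.
  case: (eqVneq ((invmx S *m Phi Y *m S) k j) 0) => [-> | ny]; first by rewrite mulr0.
  have := hX nx; have := hY ny; lia.
have : S *m ((invmx S *m Phi X *m S) *m (invmx S *m Phi Y *m S)) *m invmx S = 0.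
  by rewrite Z mulmx0 mul0mx.
by rewrite !mulmxA mulmxV // mul1mx !mulmxK.

Qed.
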